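(* Let $a$ be a positive integer and let $L_{a,a} = \{C_{i,1} : 1 \le i \le a+1\} \cup \{C_{1,j} : 1 < j \le a+1\}$, of size $n = 2a+1$. Then on the $n \times n$ board, $\mathrm{cp}_{\mathrm{free}}(L_{a,a}) = 2$.
   Context: For integers $i,j$, $C_{i,j}$ denotes the unit square cell in column $i$ and row $j$ of the integer grid (columns numbered left to right, rows numbered top to bottom). A polyomino is a finite set of cells; its size is its number of cells. For a polyomino $\mathcal{P}$ of size $n$ the board is $\mathbb{B} = \{C_{i,j} : 1 \le i,j \le n\}$. The shift of $\mathcal{P}$ by integers $(c,d)$ is $\mathcal{P}+(c,d) = \{C_{x+c,y+d} : C_{x,y} \in \mathcal{P}\}$. For $0<a\le b$ and $L_{a,b} = \{C_{i,1} : 1 \le i \le a+1\} \cup \{C_{1,j} : 1 < j \le b+1\}$, the rotations by $90^\circ, 180^\circ, 270^\circ$ clockwise are $LR_{a,b} = \{C_{i,1} : 1 \le i \le b+1\} \cup \{C_{b+1,j} : 1 \le j \le a+1\}$, $LR^2_{a,b} = \{C_{i,b+1} : 1 \le i \le a+1\} \cup \{C_{a+1,j} : 1 \le j \le b+1\}$, $LR^3_{a,b} = \{C_{i,a+1} : 1 \le i \le b+1\} \cup \{C_{1,j} : 1 \le j \le a+1\}$ (reflections are not allowed). A free copy of $L_{a,b}$ is any shift of one of these four. A set of polyominoes is a valid arrangement if each is contained in $\mathbb{B}$ and they are pairwise disjoint. A free packing of $\mathcal{P}$ is a set of free copies of $\mathcal{P}$ forming a valid arrangement such that adding any further free copy of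 $\mathcal{P}$ yields an invalid arrangement. The clumsy free packing number $\mathrm{cp}_{\mathrm{free}}(\mathcal{P})$ is the minimum number of polyominoes in a free packing of $\mathcal{P}$ on the $n \times n$ board. *)

(* Defs.v *)
From Stdlib Require Import ZArith List.
Import ListNotations.
Open Scope Z_scope.

(* A cell C_{i,j} is (i, j): column i, row j. Sets of cells are predicates. *)
Definition cell := (Z * Z)%type.
Definition cellset := cell -> Prop.

(* L_{a,b} and its clockwise rotations LR, LR^2, LR^3, exactly as in the paper. *)
Definition Lab (a b : Z) : cellset := fun '(i, j) =>
  (j = 1 /\ 1 <= i <= a + 1) \/ (i = 1 /\ 1 < j <= b + 1).
Definition LR (a b : Z) : cellset := fun '(i, j) =>
  (j = 1 /\ 1 <= i <= b + 1) \/ (i = b + 1 /\ 1 <= j <= a + 1).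
Definition LR2 (a b : Z) : cellset := fun '(i, j) =>
  (j = b + 1 /\ 1 <= i <= a + 1) \/ (i = a + 1 /\ 1 <= j <= b + 1).
Definition LR3 (a b : Z) : cellset := fun '(i, j) =>
  (j = a + 1 /\ 1 <= i <= b + 1) \/ (i = 1 /\ 1 <= j <= a + 1).

Definition shift (P : cellset) (c d : Z) : cellset := fun '(i, j) =>
  P (i - c, j - d).

(* A free copy of L_{a,b} is given by a rotation and a shift vector. *)
Inductive rot := R0 | R1 | R2 | R3.
Definition rotated (a b : Z) (r : rot) : cellset :=
  match r with R0 => Lab a b | R1 => LR a b | R2 => LR2 a b | R3 => LR3 a b end.
Definition copy := (rot * Z * Z)%type.
Definition cells_of (a b : Z) (q : copy) : cellset :=
  let '(r, c, d) := q in shift (rotated a b r) c d.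

Definition board (n : Z) : cellset := fun '(i, j) => 1 <= i <= n /\ 1 <= j <= n.

Definition contained (P Q : cellset) : Prop := forall x, P x -> Q x.
Definition disjoint (P Q : cellset) : Prop := forall x, ~ (P x /\ Q x).

(* Since copies are nonempty, disjointness forces the listed copies to be
   distinct as sets, so the length of the list is the number of polyominoes. *)
Definition valid_arrangement (a b n : Z) (S : list copy) : Prop :=
  Forall (fun q => contained (cells_of a b q) (board n)) S /\
  ForallOrdPairs (fun q q' => disjoint (cells_of a b q) (cells_of a b q')) S.

(* Size of L_{a,b} is a+b+1, so the board is (a+b+1) x (a+b+1). *)
Definition free_packing (a b : Z) (S : list copy) : Prop :=
  let n := a + b + 1 in
  valid_arrangement a b n S /\
  forall q : copy, ~ valid_arrangement a b n (q :: S).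

Definition cp_free_eq (a b : Z) (k : nat) : Prop :=
  (exists S, free_packing a b S /\ length S = k) /\
  (forall S, free_packing a b S -> (k <= length S)%nat).

(* Main.v *)
Require Import Defs.
From Stdlib Require Import ZArith List Lia.
Import ListNotations.
Open Scope Z_scope.

Lemma cells_box a c d r i j : 0 <= a -> cells_of a a (r,c,d) (i,j) ->
  c+1<=i<=c+a+1 /\ d+1<=j<=d+a+1.
Proof. intros Ha; destruct r; simpl; lia. Qed.

Lemma bounds a c d r : 0 < a ->
  contained (cells_of a a (r,c,d)) (board (a+a+1)) -> 0<=c<=a /\ 0<=d<=a.
Proof.
  intros Ha H.
  destruct r.
  - pose proof (H (c+1,d+1)) as H1; pose proof (H (c+a+1,d+1)) as H2;
    pose proof (H (c+1,d+a+1)) as H3; simpl in *.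
    specialize (H1 ltac:(lia)); specialize (H2 ltac:(lia)); specialize (H3 ltac:(lia)); lia.
  - pose proof (H (c+1,d+1)) as H1; pose proof (H (c+a+1,d+1)) as H2;
    pose proof (H (c+a+1,d+a+1)) as H3; simpl in *.
    specialize (H1 ltac:(lia)); specialize (H2 ltac:(lia)); specialize (H3 ltac:(lia)); lia.
  - pose proof (H (c+1,d+a+1)) as H1; pose proof (H (c+a+1,d+1)) as H2;
    pose proof (H (c+a+1,d+a+1)) as H3; simpl in *.
    specialize (H1 ltac:(lia)); specialize (H2 ltac:(lia)); specialize (H3 ltac:(lia)); lia.
  - pose proof (H (c+1,d+1)) as H1; pose proof (H (c+1,d+a+1)) as H2;
    pose proof (H (c+a+1,d+a+1)) as H3; simpl in *.
    specialize (H1 ltac:(lia)); specialize (H2 ltac:(lia)); specialize (H3 ltac:(lia)); lia.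
Qed.

Lemma contained_of a q : 0 < a ->
  (forall i j, cells_of a a q (i,j) -> 1 <= i <= a+a+1 /\ 1 <= j <= a+a+1) ->
  contained (cells_of a a q) (board (a+a+1)).
Proof. intros Ha H [i j] Hx. exact (H i j Hx). Qed.

Lemma disj_of a q q' :
  (forall i j, cells_of a a q (i,j) -> cells_of a a q' (i,j) -> False) ->
  disjoint (cells_of a a q) (cells_of a a q').
Proof. intros H [i j] [H1 H2]. exact (H i j H1 H2). Qed.

Theorem theorem4 (a : Z) (ha : (0 < a)%Z) : cp_free_eq a a 2.
Proof.
  split.
  - exists [(R0, 0, a-1); (R0, a, a)]. split; [|reflexivity].
    split.
    + unfold valid_arrangement; split.
      * constructor; [|constructor; [|constructor]];
           apply contained_of; auto; intros i j; simpl; lia.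
      * constructor; [constructor; [|constructor]|constructor; [constructor|constructor]].
           apply disj_of. intros i j; simpl; lia.
    + intros [[r c] d] [HF HP].
        inversion HF as [|? ? Hq HF']; subst.
        destruct (bounds a c d r ha Hq) as [Hc Hd].
        inversion HP as [|? ? HD _]; subst.
        inversion HD as [|? ? HA HD']; subst.
        inversion HD' as [|? ? HB _]; subst.
        destruct r.
        -- destruct (Z.eq_dec d a).
           ++ apply (HB (a+1,a+1)); simpl; lia.
           ++ apply (HA (c+1,a)); simpl; lia.
        -- apply (HB (c+a+1,a+1)); simpl; lia.
        -- apply (HB (c+a+1,a+1)); simpl; lia.
        -- destruct (Z.eq_dec d a).
           ++ apply (HB (a+1,a+a+1)); simpl; lia.
           ++ apply (HA (c+1,a)); simpl; lia.
  - intros S [[HF HP] Hmax].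
    destruct S as [|q1 [|q2 S]]; simpl; try lia; exfalso.
    + apply (Hmax (R0,0,0)). unfold valid_arrangement; split.
      * constructor; [|constructor]. apply contained_of; auto. intros i j; simpl; lia.
      * constructor; constructor.
    + destruct q1 as [[r c] d].
      inversion HF as [|? ? Hq _]; subst.
      assert (Hbox := fun i j => cells_box a c d r i j ltac:(lia)).
      destruct (Z_le_gt_dec c 0); destruct (Z_le_gt_dec d 0).
      * apply (Hmax (R2,a,a)). unfold valid_arrangement; split.
        -- constructor; [|exact HF]. apply contained_of; auto. intros i j; simpl; lia.
        -- constructor; [|exact HP]. constructor; [|constructor].
           apply disj_of. intros i j H1 H2. apply Hbox in H2. simpl in H1; lia.
      * apply (Hmax (R1,a,0)). unfold valid_arrangement; split.
        -- constructor; [|exact HF]. apply contained_of; auto. intros i j; simpl; lia.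
        -- constructor; [|exact HP]. constructor; [|constructor].
           apply disj_of. intros i j H1 H2. apply Hbox in H2. simpl in H1; lia.
      * apply (Hmax (R3,0,a)). unfold valid_arrangement; split.
        -- constructor; [|exact HF]. apply contained_of; auto. intros i j; simpl; lia.
        -- constructor; [|exact HP]. constructor; [|constructor].
           apply disj_of. intros i j H1 H2. apply Hbox in H2. simpl in H1; lia.
      * apply (Hmax (R0,0,0)). unfold valid_arrangement; split.
        -- constructor; [|exact HF]. apply contained_of; auto. intros i j; simpl; lia.
        -- constructor; [|exact HP]. constructor; [|constructor].
           apply disj_of. intros i j H1 H2. apply Hbox in H2. simpl in H1; lia.
Qed.
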